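(* If $\phi$ is a rational inner function on $\mathbb{D}^2$, then every $\tau\in\mathbb{T}^2$ is a B-point for $\phi$; that is, there exists a sequence $\{\lambda_k\}\subseteq\mathbb{D}^2$ converging to $\tau$ such that $\frac{1-|\phi(\lambda_k)|}{1-\|\lambda_k\|}$ is bounded, where $\|z\|=\max\{|z_1|,|z_2|\}$.
   Context: A rational inner function on $\mathbb{D}^2$ is a rational function $\phi=q/p$ holomorphic on $\mathbb{D}^2$ with $|\phi(\zeta)|=1$ for almost every $\zeta\in\mathbb{T}^2$. *)

(* Defs.v *)
From Stdlib Require Import Reals.
Open Scope R_scope.

Definition Cx : Type := (R * R)%type.
Definition C0 : Cx := (0, 0).
Definition C1 : Cx := (1, 0).
Definition Cadd (a b : Cx) : Cx := (fst a + fst b, snd a + snd b).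
Definition Csub (a b : Cx) : Cx := (fst a - fst b, snd a - snd b).
Definition Cmul (a b : Cx) : Cx :=
  (fst a * fst b - snd a * snd b, fst a * snd b + snd a * fst b).
Definition Cmod (a : Cx) : R := sqrt (fst a ^ 2 + snd a ^ 2).
(* multiplicative inverse (the inverse of 0 is 0, never used here) *)
Definition Cinv (a : Cx) : Cx :=
  (fst a / (fst a ^ 2 + snd a ^ 2), - snd a / (fst a ^ 2 + snd a ^ 2)).
Definition Cdiv (a b : Cx) : Cx := Cmul a (Cinv b).
Fixpoint Cpow (a : Cx) (n : nat) : Cx :=
  match n with O => C1 | S m => Cmul a (Cpow a m) end.

Fixpoint Csum (f : nat -> Cx) (n : nat) : Cx :=
  match n with O => C0 | S m => Cadd (Csum f m) (f m) end.

(* A polynomial of bidegree at most (d,d) is given by its coefficients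
   c i j (only 0 <= i,j <= d matter); its value at (z,w) is
   sum_{i,j <= d} c i j z^i w^j. *)
Definition poly2_eval (d : nat) (c : nat -> nat -> Cx) (z : Cx * Cx) : Cx :=
  Csum (fun i => Csum (fun j =>
     Cmul (c i j) (Cmul (Cpow (fst z) i) (Cpow (snd z) j))) (S d)) (S d).

Definition in_D2 (z : Cx * Cx) : Prop := Cmod (fst z) < 1 /\ Cmod (snd z) < 1.
Definition in_T2 (z : Cx * Cx) : Prop := Cmod (fst z) = 1 /\ Cmod (snd z) = 1.
Definition supnorm (z : Cx * Cx) : R := Rmax (Cmod (fst z)) (Cmod (snd z)).

Definition C2_cv (lam : nat -> Cx * Cx) (tau : Cx * Cx) : Prop :=
  forall eps : R, 0 < eps -> exists N : nat, forall k : nat, (N <= k)%nat ->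
    Cmod (Csub (fst (lam k)) (fst tau)) < eps /\
    Cmod (Csub (snd (lam k)) (snd tau)) < eps.

(* phi = q/p is a rational function holomorphic on D^2: written in lowest
   terms, the denominator p has no zeros in D^2. *)
Definition rational_holo_D2 (d : nat) (p q : nat -> nat -> Cx) : Prop :=
  forall z, in_D2 z -> poly2_eval d p z <> C0.

(* |phi| = 1 a.e. on T^2: at every point of T^2 off the (null) zero set of p
   the boundary value of phi is q/p, and it has modulus one. *)
Definition unimodular_ae_T2 (d : nat) (p q : nat -> nat -> Cx) : Prop :=
  forall zeta, in_T2 zeta -> poly2_eval d p zeta <> C0 ->
    Cmod (Cdiv (poly2_eval d q zeta) (poly2_eval d p zeta)) = 1.

Definition rational_inner (d : nat) (p q : nat -> nat -> Cx) : Prop :=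
  rational_holo_D2 d p q /\ unimodular_ae_T2 d p q.

Definition phi_of (d : nat) (p q : nat -> nat -> Cx) (z : Cx * Cx) : Cx :=
  Cdiv (poly2_eval d q z) (poly2_eval d p z).

Definition B_point (phi : Cx * Cx -> Cx) (tau : Cx * Cx) : Prop :=
  exists lam : nat -> Cx * Cx,
    (forall k, in_D2 (lam k)) /\ C2_cv lam tau /\
    exists M : R, forall k,
      Rabs ((1 - Cmod (phi (lam k))) / (1 - supnorm (lam k))) <= M.

(* Main.v *)
Require Import Defs.
From Stdlib Require Import Reals Lra Lia Classical.
From Coquelicot Require Import Coquelicot.
Open Scope R_scope.

Fixpoint cpow (z : C) (n : nat) : C :=
  match n with O => RtoC 1 | S m => (z * cpow z m)%C end.

Lemma Cpow_cpow z n : Defs.Cpow z n = cpow z n.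
Proof. induction n; simpl; [reflexivity| rewrite IHn; reflexivity]. Qed.

Lemma Cmod_cpow z n : Cmod (cpow z n) = Cmod z ^ n.
Proof. induction n; simpl. apply Cmod_1. rewrite Cmod_mult, IHn; reflexivity. Qed.

Inductive Poly : nat -> (C -> C) -> Prop :=
| Pc : forall c, Poly 0 (fun _ => c)
| Pid : Poly 1 (fun z => z)
| Padd : forall n f g, Poly n f -> Poly n g -> Poly n (fun z => f z + g z)%C
| Pmul : forall n m f g, Poly n f -> Poly m g -> Poly (n+m) (fun z => f z * g z)%C
| PS : forall n f, Poly n f -> Poly (S n) f
| Pext : forall n f g, Poly n f -> (forall z, f z = g z) -> Poly n g.

Lemma Poly_mono n m f : Poly n f -> (n <= m)%nat -> Poly m f.
Proof. intros H Hle; induction Hle; [exact H| apply PS; exact IHHle]. Qed.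

Lemma Poly_const n c : Poly n (fun _ => c).
Proof. apply (Poly_mono 0); [apply Pc| lia]. Qed.

Lemma Poly_dd : forall n f, Poly n f ->
  (n = 0%nat -> forall z, f z = f (RtoC 1)) /\
  (forall k, n = S k -> exists g, Poly k g /\ forall z, f z = (f (RtoC 1) + (z - RtoC 1) * g z)%C).
Proof.
  intros n f H; induction H.
  - split; [reflexivity| discriminate].
  - split; [discriminate|]. intros k Hk. injection Hk as <-.
    exists (fun _ => RtoC 1); split; [apply Pc| intros; ring].
  - destruct IHPoly1 as [A1 B1], IHPoly2 as [A2 B2]. split.
    + intros Hn z; rewrite (A1 Hn z), (A2 Hn z); reflexivity.
    + intros k Hk. destruct (B1 k Hk) as [g1 [Hg1 E1]], (B2 k Hk) as [g2 [Hg2 E2]].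
      exists (fun z => g1 z + g2 z)%C; split; [apply Padd; auto|].
      intros z; rewrite (E1 z), (E2 z); ring.
  - destruct IHPoly1 as [A1 B1], IHPoly2 as [A2 B2]. split.
    + intros Hn z. assert (n = 0%nat) by lia. assert (m = 0%nat) by lia.
      rewrite (A1 H1 z), (A2 H2 z); reflexivity.
    + intros k Hk. destruct n as [|n'].
      * simpl in Hk. destruct (B2 k Hk) as [G [HG EG]].
        exists (fun z => f (RtoC 1) * G z)%C; split.
        -- apply (Pmul 0 k); [apply Pc| exact HG].
        -- intros z; rewrite (A1 eq_refl z), (EG z); ring.
      * destruct (B1 n' eq_refl) as [F [HF EF]]. destruct m as [|m'].
        -- exists (fun z => F z * g (RtoC 1))%C; split.
           ++ replace k with (n' + 0)%nat by lia. apply Pmul; [exact HF| apply Pc].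
           ++ intros z; rewrite (EF z), (A2 eq_refl z); ring.
        -- destruct (B2 m' eq_refl) as [G [HG EG]].
           exists (fun z => f (RtoC 1) * G z + F z * g z)%C; split.
           ++ replace k with (n' + S m')%nat by lia. apply Padd.
              ** apply (Poly_mono m'); [apply (Pmul 0 m'); [apply Pc| exact HG]| lia].
              ** apply Pmul; auto.
           ++ intros z; rewrite (EF z), (EG z); ring.
  - split; [discriminate|]. intros k Hk. injection Hk as <-.
    destruct IHPoly as [A1 B1]. destruct n as [|n'].
    + exists (fun _ => RtoC 0); split; [apply Pc| intros z; rewrite (A1 eq_refl z); ring].
    + destruct (B1 n' eq_refl) as [G [HG EG]]. exists G; split; [apply PS; auto| exact EG].
  - destruct IHPoly as [A1 B1]. split.
    + intros Hn z; rewrite <- !H0; apply A1; auto.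
    + intros k Hk. destruct (B1 k Hk) as [G [HG EG]]. exists G; split; auto.
      intros z; rewrite <- !H0; apply EG.
Qed.

Lemma Poly_bound n f : Poly n f -> exists B, 0 <= B /\ forall z, Cmod z <= 2 -> Cmod (f z) <= B.
Proof.
  intros H; induction H.
  - exists (Cmod c); split; [apply Cmod_ge_0| intros; lra].
  - exists 2; split; [lra| auto].
  - destruct IHPoly1 as [B1 [P1 H1]], IHPoly2 as [B2 [P2 H2]].
    exists (B1 + B2); split; [lra|]. intros z Hz.
    eapply Rle_trans; [apply Cmod_triangle|]. specialize (H1 z Hz); specialize (H2 z Hz); lra.
  - destruct IHPoly1 as [B1 [P1 H1]], IHPoly2 as [B2 [P2 H2]].
    exists (B1 * B2); split; [nra|]. intros z Hz. rewrite Cmod_mult.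
    apply Rmult_le_compat; auto; apply Cmod_ge_0.
  - exact IHPoly.
  - destruct IHPoly as [B [PB HB]]. exists B; split; auto. intros z Hz; rewrite <- H0; auto.
Qed.

Lemma Poly_lip n f : Poly n f -> exists K, 0 <= K /\ forall z, Cmod z <= 2 ->
  Cmod (f z - f (RtoC 1))%C <= K * Cmod (z - RtoC 1)%C.
Proof.
  intros H. destruct (Poly_dd n f H) as [A B]. destruct n as [|n'].
  - exists 0; split; [lra|]. intros z _. rewrite (A eq_refl z).
    replace (f (RtoC 1) - f (RtoC 1))%C with (RtoC 0) by ring. rewrite Cmod_0.
    pose proof (Cmod_ge_0 (z - RtoC 1)%C); nra.
  - destruct (B n' eq_refl) as [G [HG EG]]. destruct (Poly_bound _ _ HG) as [K [PK HK]].
    exists K; split; auto. intros z Hz. rewrite (EG z).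
    replace (f (RtoC 1) + (z - RtoC 1) * G z - f (RtoC 1))%C with ((z - RtoC 1) * G z)%C by ring.
    rewrite Cmod_mult. specialize (HK z Hz). pose proof (Cmod_ge_0 (z - RtoC 1)%C). nra.
Qed.

Lemma Poly_factor : forall D f, Poly D f -> forall z0, f z0 <> RtoC 0 ->
  exists m f1, Poly D f1 /\ f1 (RtoC 1) <> RtoC 0 /\ forall z, f z = (cpow (z - RtoC 1) m * f1 z)%C.
Proof.
  induction D as [|k IH]; intros f Hf z0 Hz0.
  - destruct (Poly_dd _ _ Hf) as [A _]. exists 0%nat, f; split; auto. split.
    + rewrite <- (A eq_refl z0); auto.
    + intros z; simpl; ring.
  - destruct (classic (f (RtoC 1) = RtoC 0)) as [E|E].
    + destruct (Poly_dd _ _ Hf) as [_ B]. destruct (B k eq_refl) as [G [HG EG]].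
      assert (G z0 <> RtoC 0).
      { intros HG0; apply Hz0; rewrite (EG z0), E, HG0; ring. }
      destruct (IH G HG z0 H) as [m [f1 [Hf1 [N1 E1]]]].
      exists (S m), f1; split; [apply PS; auto| split; auto].
      intros z; rewrite (EG z), E, (E1 z); simpl; ring.
    + exists 0%nat, f; split; auto. split; auto. intros z; simpl; ring.
Qed.
Lemma Rabs_le_inv x y : Rabs x <= y -> -y <= x <= y.
Proof. unfold Rabs; destruct (Rcase_abs x); lra. Qed.

Lemma small c S t0 : 0 < t0 -> 0 <= S -> (forall t, 0 < t <= t0 -> c <= t * S) -> c <= 0.
Proof.
  intros H0 HS H. destruct (Rle_dec c 0) as [|Hc]; auto. exfalso.
  set (t := Rmin t0 (c / (2 * (S + 1)))).
  assert (Hc' : 0 < c / (2 * (S + 1))) by (apply Rdiv_lt_0_compat; lra).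
  assert (Ht : 0 < t) by (unfold t; apply Rmin_pos; lra).
  assert (Ht1 : t <= c / (2 * (S+1))) by apply Rmin_r.
  specialize (H t (conj Ht (Rmin_l _ _))).
  assert (t * (2 * (S+1)) <= c).
  { apply (Rmult_le_compat_r (2*(S+1))) in Ht1; [|lra].
    unfold Rdiv in Ht1. rewrite Rmult_assoc, Rinv_l in Ht1; lra. }
  nra.
Qed.

Lemma tpow_le t k : 0 <= t <= 1 -> t ^ (S k) <= t.
Proof. intros Ht; induction k; simpl in *; nra. Qed.

Lemma order_aux a b KA KB m m' t0 : 0 < a -> 0 <= KA -> 0 <= KB -> 0 < t0 -> (m < m')%nat ->
  (forall t, 0 < t <= t0 -> exists x y, 0 <= x /\ 0 <= y /\ Rabs (x - a) <= KA * t /\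
     Rabs (y - b) <= KB * t /\ t ^ m' * y = t ^ m * x) -> False.
Proof.
  intros Ha HKA HKB Ht0 Hlt H.
  assert (a <= 0); [|lra].
  apply (small a (Rabs b + KA + KB) (Rmin t0 1)); [apply Rmin_pos; lra| |].
  - pose proof (Rabs_pos b); lra.
  - intros t [Ht Ht1]. assert (t <= t0) by (eapply Rle_trans; [exact Ht1| apply Rmin_l]).
    assert (t <= 1) by (eapply Rle_trans; [exact Ht1| apply Rmin_r]).
    destruct (H t (conj Ht H0)) as [x [y [Hx [Hy [E1 [E2 E]]]]]].
    apply Rabs_le_inv in E1; apply Rabs_le_inv in E2.
    replace m' with (m + S (m' - m - 1))%nat in E by lia.
    rewrite pow_add in E.
    assert (Hp : 0 < t ^ m) by (apply pow_lt; lra).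
    assert (x = t ^ S (m' - m - 1) * y) by (apply (Rmult_eq_reg_l (t ^ m)); [lra| lra]).
    pose proof (tpow_le t (m' - m - 1) (conj (Rlt_le _ _ Ht) H1)).
    assert (0 <= t ^ S (m' - m - 1)) by (apply pow_le; lra).
    assert (x <= t * y) by nra.
    pose proof (Rle_abs b). nra.
Qed.

Lemma order_eq a b KA KB m m' t0 : 0 < a -> 0 < b -> 0 <= KA -> 0 <= KB -> 0 < t0 ->
  (forall t, 0 < t <= t0 -> exists x y, 0 <= x /\ 0 <= y /\ Rabs (x - a) <= KA * t /\
     Rabs (y - b) <= KB * t /\ t ^ m' * y = t ^ m * x) -> m = m' /\ a = b.
Proof.
  intros Ha Hb HKA HKB Ht0 H.
  destruct (Nat.lt_total m m') as [Hlt|[Heq|Hgt]].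
  - exfalso; exact (order_aux a b KA KB m m' t0 Ha HKA HKB Ht0 Hlt H).
  - subst m'. split; auto.
    enough (Hab : Rabs (a - b) <= 0) by (apply Rabs_le_inv in Hab; lra).
    apply (small _ (KA + KB) t0); auto; [lra|].
    intros t Ht. destruct (H t Ht) as [x [y [Hx [Hy [E1 [E2 E]]]]]].
    assert (Hp : 0 < t ^ m) by (apply pow_lt; lra).
    assert (x = y) by (apply (Rmult_eq_reg_l (t ^ m)); lra).
    subst y. apply Rabs_le_inv in E1; apply Rabs_le_inv in E2.
    apply Rabs_le; nra.
  - exfalso. apply (order_aux b a KB KA m' m t0 Hb HKB HKA Ht0 Hgt).
    intros t Ht. destruct (H t Ht) as [x [y [Hx [Hy [E1 [E2 E]]]]]].
    exists y, x; repeat split; auto.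
Qed.

Lemma Dmod a : Defs.Cmod a = Cmod a.
Proof. reflexivity. Qed.
Lemma Ddiv a b : Defs.Cdiv a b = (a / b)%C.
Proof. reflexivity. Qed.
Lemma Dsub a b : Defs.Csub a b = (a - b)%C.
Proof. reflexivity. Qed.

Lemma Cmod_rev a b : Rabs (Cmod a - Cmod b) <= Cmod (a - b)%C.
Proof.
  apply Rabs_le. split.
  - assert (Cmod b <= Cmod (b - a)%C + Cmod a).
    { replace b with ((b - a) + a)%C at 1 by ring. apply Cmod_triangle. }
    replace (b - a)%C with (- (a - b))%C in H by ring. rewrite Cmod_opp in H. lra.
  - assert (Cmod a <= Cmod (a - b)%C + Cmod b).
    { replace a with ((a - b) + b)%C at 1 by ring. apply Cmod_triangle. }
    lra.
Qed.

Lemma Cmod_pos_neq x : 0 < Cmod x -> x <> RtoC 0.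
Proof. intros H E; rewrite E, Cmod_0 in H; lra. Qed.

Definition zt (t : R) : C := (1 - t ^ 2 / 2, t * sqrt (1 - t ^ 2 / 4)).

Lemma Cmod_eq (a : C) r : 0 <= r -> fst a ^ 2 + snd a ^ 2 = r ^ 2 -> Cmod a = r.
Proof. intros Hr E. unfold Cmod. rewrite E. apply sqrt_pow2; auto. Qed.

Lemma zt_mod t : 0 < t <= 1 -> Cmod (zt t) = 1 /\ Cmod (zt t - RtoC 1)%C = t.
Proof.
  intros Ht. assert (Hs : sqrt (1 - t ^ 2 / 4) * sqrt (1 - t ^ 2 / 4) = 1 - t ^ 2 / 4)
    by (apply sqrt_sqrt; nra).
  unfold zt. set (S := sqrt (1 - t ^ 2 / 4)) in *.
  assert (H2 : t * t * (S * S) = t * t * (1 - t ^ 2 / 4)) by (rewrite Hs; ring).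
  split; apply Cmod_eq; try lra; unfold Cminus, Cplus, Copp, RtoC; simpl; nra.
Qed.

Lemma Poly_Csum n N (F : nat -> C -> C) : (forall i, (i < N)%nat -> Poly n (F i)) ->
  Poly n (fun z => Csum (fun i => F i z) N).
Proof.
  induction N; intros H; simpl.
  - apply Poly_const.
  - apply (Pext _ (fun z => (Csum (fun i => F i z) N + F N z)%C)); [|reflexivity].
    apply Padd; [apply IHN; intros; apply H; lia| apply H; lia].
Qed.

Lemma Poly_pow a i : Poly i (fun z => Defs.Cpow (z * a)%C i).
Proof.
  induction i; simpl.
  - apply Pc.
  - apply (Pext _ (fun z => ((z * a) * Defs.Cpow (z * a)%C i)%C)); [|reflexivity].
    apply (Pmul 1 i); [|exact IHi].
    apply (Pmul 1 0); [apply Pid| apply Pc].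
Qed.

Lemma Poly_slice d c t1 t2 : Poly (d + d) (fun z => poly2_eval d c ((z * t1)%C, (z * t2)%C)).
Proof.
  unfold poly2_eval. apply Poly_Csum; intros i Hi. apply Poly_Csum; intros j Hj.
  cbn [fst snd].
  apply (Poly_mono (0 + (i + j))); [|lia].
  apply (Pext _ (fun z => (c i j * (Defs.Cpow (z * t1) i * Defs.Cpow (z * t2) j))%C)); [|reflexivity].
  apply Pmul; [apply Pc| apply Pmul; apply Poly_pow].
Qed.

Lemma final_bound a x y KA KB u : 0 < a -> 0 <= KA -> 0 <= KB -> 0 < u -> u * KA <= a / 2 ->
  Rabs (x - a) <= KA * u -> Rabs (y - a) <= KB * u -> Rabs ((1 - y / x) / u) <= 2 * (KA + KB) / a.
Proof.
  intros Ha HKA HKB Hu Hua Hx Hy.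
  apply Rabs_le_inv in Hx; apply Rabs_le_inv in Hy.
  assert (Hx0 : a / 2 <= x) by lra.
  replace ((1 - y / x) / u) with ((x - y) * / (x * u)) by (field; lra).
  rewrite Rabs_mult, (Rabs_right (/ (x * u))) by (apply Rle_ge, Rlt_le, Rinv_0_lt_compat; nra).
  assert (Hxy : Rabs (x - y) <= (KA + KB) * u) by (apply Rabs_le; lra).
  apply Rle_trans with ((KA + KB) * u * / (x * u)).
  - apply Rmult_le_compat_r; [apply Rlt_le, Rinv_0_lt_compat; nra| exact Hxy].
  - replace ((KA + KB) * u * / (x * u)) with ((KA + KB) / x) by (field; lra).
    unfold Rdiv. apply Rle_trans with ((KA + KB) * / (a / 2)).
    + apply Rmult_le_compat_l; [lra|]. apply Rinv_le_contravar; lra.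
    + right; field; lra.
Qed.

Lemma Cmod_rmul (r : R) (t : C) : Cmod t = 1 -> Cmod (RtoC r * t)%C = Rabs r.
Proof. intros H; rewrite Cmod_mult, H, Cmod_R; ring. Qed.

Theorem lemma2p1 (d : nat) (p q : nat -> nat -> Cx) :
  rational_inner d p q ->
  forall tau : Cx * Cx, in_T2 tau -> B_point (phi_of d p q) tau.
Proof.
  intros [Hholo Hunim] [t1 t2] [Ht1 Ht2]. cbn [fst snd] in Ht1, Ht2.
  rewrite Dmod in Ht1, Ht2.
  set (P := fun z => poly2_eval d p ((z * t1)%C, (z * t2)%C)).
  set (Q := fun z => poly2_eval d q ((z * t1)%C, (z * t2)%C)).
  assert (HP : Poly (d + d) P) by apply Poly_slice.
  assert (HQ : Poly (d + d) Q) by apply Poly_slice.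
  assert (HT : forall z, Cmod z = 1 -> P z <> RtoC 0 -> Cmod (Q z) = Cmod (P z)).
  { intros z Hz Hne.
    assert (Hin : in_T2 ((z * t1)%C, (z * t2)%C)).
    { unfold in_T2; cbn [fst snd]; rewrite !Dmod, !Cmod_mult, Hz, Ht1, Ht2; split; ring. }
    specialize (Hunim _ Hin Hne). rewrite Dmod, Ddiv, Cmod_div in Hunim by exact Hne.
    change (Cmod (Q z) / Cmod (P z) = 1) in Hunim.
    assert (0 < Cmod (P z)) by (apply Cmod_gt_0; exact Hne).
    apply (Rmult_eq_compat_r (Cmod (P z))) in Hunim. unfold Rdiv in Hunim.
    rewrite Rmult_assoc, Rinv_l in Hunim by lra. lra. }
  assert (P0 : P (RtoC 0) <> RtoC 0).
  { apply Hholo. unfold in_D2; cbn [fst snd]; rewrite !Dmod.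
    replace (RtoC 0 * t1)%C with (RtoC 0) by ring.
    replace (RtoC 0 * t2)%C with (RtoC 0) by ring. rewrite ?Dmod, !Cmod_R, Rabs_R0; split; lra. }
  destruct (Poly_factor _ _ HP _ P0) as [m [A [HA [A1 EA]]]].
  destruct (Poly_lip _ _ HA) as [KA [HKA LA]].
  set (a := Cmod (A (RtoC 1))).
  assert (Ha : 0 < a) by (apply Cmod_gt_0; exact A1).
  set (t0 := Rmin 1 (a / (2 * (KA + 1)))).
  assert (Ht0 : 0 < t0) by (apply Rmin_pos; [lra| apply Rdiv_lt_0_compat; lra]).
  assert (Ht0a : t0 * (2 * (KA + 1)) <= a).
  { assert (t0 <= a / (2 * (KA + 1))) by apply Rmin_r.
    apply (Rmult_le_compat_r (2 * (KA + 1))) in H; [|lra].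
    unfold Rdiv in H. rewrite Rmult_assoc, Rinv_l in H; lra. }
  assert (Ht01 : t0 <= 1) by apply Rmin_l.
  assert (Hcirc : forall t, 0 < t <= t0 ->
    Cmod (zt t) = 1 /\ Cmod (zt t - RtoC 1)%C = t /\
    Rabs (Cmod (A (zt t)) - a) <= KA * t /\ a / 2 <= Cmod (A (zt t)) /\
    P (zt t) <> RtoC 0 /\ Cmod (P (zt t)) = t ^ m * Cmod (A (zt t))).
  { intros t Ht. destruct (zt_mod t) as [Z1 Z2]; [lra|].
    assert (L : Rabs (Cmod (A (zt t)) - a) <= KA * t).
    { eapply Rle_trans; [apply Cmod_rev|]. eapply Rle_trans; [apply LA; lra|]. rewrite Z2; lra. }
    assert (Hge : a / 2 <= Cmod (A (zt t))).
    { apply Rabs_le_inv in L. nra. }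
    assert (EP : Cmod (P (zt t)) = t ^ m * Cmod (A (zt t))).
    { rewrite EA, Cmod_mult, Cmod_cpow, Z2; reflexivity. }
    repeat split; auto.
    apply Cmod_pos_neq. rewrite EP. apply Rmult_lt_0_compat; [apply pow_lt|]; lra. }
  assert (Q0 : Q (zt t0) <> RtoC 0).
  { destruct (Hcirc t0) as [Z1 [_ [_ [Hge [Hne EP]]]]]; [lra|].
    apply Cmod_pos_neq. rewrite HT by auto. apply Cmod_gt_0; auto. }
  destruct (Poly_factor _ _ HQ _ Q0) as [m' [B [HB [B1 EB]]]].
  destruct (Poly_lip _ _ HB) as [KB [HKB LB]].
  destruct (order_eq a (Cmod (B (RtoC 1))) KA KB m m' t0) as [Em Eab]; auto.
  { apply Cmod_gt_0; auto. }
  { intros t Ht. destruct (Hcirc t Ht) as [Z1 [Z2 [L [Hge [Hne EP]]]]].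
    exists (Cmod (A (zt t))), (Cmod (B (zt t))). repeat split; auto; try apply Cmod_ge_0.
    - eapply Rle_trans; [apply Cmod_rev|]. eapply Rle_trans; [apply LB; lra|]. rewrite Z2; lra.
    - rewrite <- EP, <- HT by auto. rewrite EB, Cmod_mult, Cmod_cpow, Z2; reflexivity. }
  subst m'.
  set (s := Rmin (1 / 2) t0).
  assert (Hs : 0 < s) by (apply Rmin_pos; lra).
  assert (Hs1 : s <= 1 / 2) by apply Rmin_l.
  assert (Hs2 : s <= t0) by apply Rmin_r.
  set (u := fun k : nat => s / (INR k + 1)).
  assert (Hu : forall k, 0 < u k <= s).
  { intros k. pose proof (pos_INR k). unfold u. split.
    - apply Rdiv_lt_0_compat; lra.
    - unfold Rdiv. rewrite <- (Rmult_1_r s) at 2. apply Rmult_le_compat_l; [lra|].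
      rewrite <- Rinv_1. apply Rinv_le_contravar; lra. }
  exists (fun k => ((RtoC (1 - u k) * t1)%C, (RtoC (1 - u k) * t2)%C)).
  split; [|split].
  - intros k. destruct (Hu k). unfold in_D2; cbn [fst snd]; rewrite !Dmod, !Cmod_rmul by auto.
    rewrite Rabs_right by lra. lra.
  - intros eps Heps. destruct (archimed_cor1 eps Heps) as [N [HN HN0]].
    exists N. intros k Hk. cbn [fst snd].
    assert (Hk' : Cmod (RtoC (1 - u k) * t1 - t1)%C = u k /\ Cmod (RtoC (1 - u k) * t2 - t2)%C = u k).
    { replace (RtoC (1 - u k) * t1 - t1)%C with (RtoC (- u k) * t1)%C
        by (rewrite <- (Cmult_1_l t1) at 2; rewrite RtoC_opp, RtoC_minus; ring).
      replace (RtoC (1 - u k) * t2 - t2)%C with (RtoC (- u k) * t2)%C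
        by (rewrite <- (Cmult_1_l t2) at 2; rewrite RtoC_opp, RtoC_minus; ring).
      rewrite !Cmod_rmul by auto. rewrite Rabs_Ropp, Rabs_right by (destruct (Hu k); lra). auto. }
    assert (Hue : u k < eps); [|split; rewrite Dmod, Dsub; [rewrite (proj1 Hk')| rewrite (proj2 Hk')]; exact Hue].
    apply Rle_lt_trans with (/ INR N); auto.
    apply le_INR in Hk. assert (0 < INR N) by (apply lt_0_INR; lia).
    unfold u, Rdiv. apply Rle_trans with (1 * / (INR k + 1)).
    + apply Rmult_le_compat_r; [apply Rlt_le, Rinv_0_lt_compat; lra| lra].
    + rewrite Rmult_1_l. apply Rinv_le_contravar; lra.
  - exists (2 * (KA + KB) / a). intros k.
    destruct (Hu k) as [Hu0 Hus].
    set (r := 1 - u k).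
    change (Rabs ((1 - Defs.Cmod (Defs.Cdiv (Q (RtoC r)) (P (RtoC r)))) /
      (1 - Rmax (Defs.Cmod (RtoC r * t1)%C) (Defs.Cmod (RtoC r * t2)%C))) <= 2 * (KA + KB) / a).
    rewrite !Dmod, Ddiv, !Cmod_rmul by auto.
    assert (Er : Rabs r = r) by (apply Rabs_right; unfold r; lra).
    assert (Er1 : Cmod (RtoC r - RtoC 1)%C = u k).
    { rewrite <- RtoC_minus, Cmod_R. unfold r. rewrite Rabs_left by lra. ring. }
    assert (Hr2 : Cmod (RtoC r) <= 2) by (rewrite Cmod_R, Er; unfold r; lra).
    assert (LA' : Rabs (Cmod (A (RtoC r)) - a) <= KA * u k).
    { eapply Rle_trans; [apply Cmod_rev|]. eapply Rle_trans; [apply LA; auto|]. rewrite Er1; lra. }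
    assert (LB' : Rabs (Cmod (B (RtoC r)) - a) <= KB * u k).
    { rewrite Eab. eapply Rle_trans; [apply Cmod_rev|]. eapply Rle_trans; [apply LB; auto|]. rewrite Er1; lra. }
    assert (Hua : u k * KA <= a / 2) by nra.
    assert (HAr : 0 < Cmod (A (RtoC r))) by (apply Rabs_le_inv in LA'; nra).
    assert (Hpm : 0 < u k ^ m) by (apply pow_lt; lra).
    assert (EPr : Cmod (P (RtoC r)) = u k ^ m * Cmod (A (RtoC r)))
      by (rewrite EA, Cmod_mult, Cmod_cpow, Er1; reflexivity).
    assert (EQr : Cmod (Q (RtoC r)) = u k ^ m * Cmod (B (RtoC r)))
      by (rewrite EB, Cmod_mult, Cmod_cpow, Er1; reflexivity).
    rewrite Cmod_div by (apply Cmod_pos_neq; rewrite EPr; nra).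
    rewrite EPr, EQr, Er, Rmax_left by lra.
    replace (u k ^ m * Cmod (B (RtoC r)) / (u k ^ m * Cmod (A (RtoC r))))
      with (Cmod (B (RtoC r)) / Cmod (A (RtoC r))) by (field; lra).
    replace (1 - r) with (u k) by (unfold r; ring).
    apply final_bound; auto.
Qed.
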